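(* Let $(\mathfrak{X},\pi)$, $a$, $s$, $S$ be as in the context, let $\eta\in(0,\min\{1,\|a\|^{-1}\})$ and $\mathbb{H}_\eta:=\{z\in\mathbb{H}:\operatorname{Im}z\ge\eta,\ |z|\le\eta^{-1}\}$. Let $\mathfrak{B}_\eta$ be the set of functions $\mathfrak{u}:\mathbb{H}_\eta\to\mathcal{B}(\mathfrak{X},\mathbb{H})$ with $\inf_{z\in\mathbb{H}_\eta}\inf_x\operatorname{Im}\mathfrak{u}_x(z)\ge\eta^3/(2+\|S\|)^2$ and $\sup_{z\in\mathbb{H}_\eta}\|\mathfrak{u}(z)\|\le1/\eta$, and define $\Phi(\mathfrak{u})(z):=-1/(z+a+S\mathfrak{u}(z))$. Then $\Phi$ maps $\mathfrak{B}_\eta$ to itself and for all $\mathfrak{u},\mathfrak{w}\in\mathfrak{B}_\eta$ \[ \sup_{z\in\mathbb{H}_\eta}\sup_{x\in\mathfrak{X}}D\big(\Phi(\mathfrak{u})_x(z),\Phi(\mathfrak{w})_x(z)\big)\le\Big(1+\frac{\eta^2}{\|S\|}\Big)^{-2}\sup_{z\in\mathbb{H}_\eta}\sup_{x\in\mathfrak{X}}D\big(\mathfrak{u}_x(z),\mathfrak{w}_x(z)\big), \] where $D(\zeta,\omega):=\frac{|\zeta-\omega|^2}{(\operatorname{Im}\zeta)(\operatorname{Im}\omega)}$ for $\zeta,\omega\in\mathbb{H}$. In particular, the fixed point equation $\mathfrak{u}=\Phi(\mathfrak{u})$ has a unique solution $\mathfrak{u}\in\mathfrak{B}_\eta$.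
   Context: Let $(\mathfrak{X},\pi)$ be a measure space where $\pi$ is a probability measure; $\mathcal{B}(\mathfrak{X},\mathbb{D})$ denotes bounded measurable $\mathbb{D}$-valued functions with sup norm $\|w\|=\sup_x|w_x|$, and $\|S\|$ the induced operator norm. Let $a\in\mathcal{B}(\mathfrak{X},\mathbb{R})$, $s\in\mathcal{B}(\mathfrak{X}^2,[0,\infty))$ symmetric, $(Sw)_x=\int s_{xy}w_y\,\pi(\mathrm{d}y)$. $\mathbb{H}$ is the open complex upper half-plane. Operations on functions ($1/\cdot$, addition of $z$) are pointwise in $x$. (If $\|S\|=0$ the factor $(1+\eta^2/\|S\|)^{-2}$ is read as $0$.) *)

(* Defs.v *)
From HB Require Import structures.
From mathcomp Require Import all_boot all_order all_algebra.
From mathcomp Require Import all_classical all_reals all_analysis.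
From mathcomp Require Import complex.

Set Implicit Arguments.
Unset Strict Implicit.
Unset Printing Implicit Defensive.

Import Order.TTheory GRing.Theory Num.Theory.
Local Open Scope classical_set_scope.
Local Open Scope ring_scope.

Section Defs.
Context {R : realType} {d : measure_display} {X : measurableType d}.

Definition cre (z : R[i]) : R := @complex.Re R z.
Definition cim (z : R[i]) : R := @complex.Im R z.

Definition cmod (z : R[i]) : R := Num.sqrt (cre z ^+ 2 + cim z ^+ 2).

Definition supnorm (w : X -> R[i]) : R := sup (range (fun x => cmod (w x))).
Definition supnormR (a : X -> R) : R := sup (range (fun x => `|a x|)).

Definition cmeasurable (w : X -> R[i]) : Prop :=
  measurable_fun setT (fun x => cre (w x)) /\ measurable_fun setT (fun x => cim (w x)).

Definition cbounded (w : X -> R[i]) : Prop :=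
  exists M : R, forall x, cmod (w x) <= M.

Definition BC (w : X -> R[i]) : Prop := cmeasurable w /\ cbounded w.

Definition BH (w : X -> R[i]) : Prop := BC w /\ (forall x, 0 < cim (w x)).

Definition Sop (P : probability X R) (s : X -> X -> R) (w : X -> R[i]) : X -> R[i] :=
  fun x => @complex.Complex R (Rintegral P setT (fun y => s x y * cre (w y)))
                   (Rintegral P setT (fun y => s x y * cim (w y))).

Definition opnorm (P : probability X R) (s : X -> X -> R) : R :=
  sup [set supnorm (Sop P s w) | w in [set w | BC w /\ supnorm w <= 1]].

Definition Heta (eta : R) : set R[i] :=
  [set z | 0 < cim z /\ eta <= cim z /\ cmod z <= eta^-1].

(* the set B_eta of functions H_eta -> B(X,H) (values off H_eta are irrelevant) *)
Definition Beta (P : probability X R) (s : X -> X -> R) (eta : R)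
  : set (R[i] -> X -> R[i]) :=
  [set u | forall z, Heta eta z ->
      BH (u z) /\
      (forall x, eta ^+ 3 / (2 + opnorm P s) ^+ 2 <= cim (u z x)) /\
      (forall x, cmod (u z x) <= eta^-1)].

Definition Phi (P : probability X R) (a : X -> R) (s : X -> X -> R)
  (u : R[i] -> X -> R[i]) : R[i] -> X -> R[i] :=
  fun z x => - (z + @complex.Complex R (a x) 0 + Sop P s (u z) x)^-1.

Definition Dh (zeta omega : R[i]) : R :=
  cmod (zeta - omega) ^+ 2 / (cim zeta * cim omega).

Definition supD (eta : R) (u w : R[i] -> X -> R[i]) : R :=
  sup [set r | exists z x, Heta eta z /\ r = Dh (u z x) (w z x)].

(* contraction factor (1 + eta^2/||S||)^(-2), read as 0 when ||S|| = 0 *)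
Definition kfactor (P : probability X R) (s : X -> X -> R) (eta : R) : R :=
  if opnorm P s == 0 then 0 else ((1 + eta ^+ 2 / opnorm P s) ^+ 2)^-1.

End Defs.

(* Main.v *)
Require Import Defs.
From HB Require Import structures.
From mathcomp Require Import all_boot all_order all_algebra.
From mathcomp Require Import all_classical all_reals all_analysis.
From mathcomp Require Import complex.
From mathcomp Require Import ring lra.
Import Order.TTheory GRing.Theory Num.Theory.
Local Open Scope classical_set_scope.
Local Open Scope ring_scope.
Set Implicit Arguments. Unset Strict Implicit. Unset Printing Implicit Defensive.
Local Notation mfunM := measurable_realfun.measurable_funM.
Local Notation mfunD := measurable_realfun.measurable_funD.
Local Notation mfunB := measurable_realfun.measurable_funB.
Local Notation mfunN := measurable_realfun.measurable_funN.
Section C.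
Variable R : realType.
Implicit Types z w : R[i].
Lemma creD z w : cre (z + w) = cre z + cre w. Proof. by case: z; case: w. Qed.
Lemma cimD z w : cim (z + w) = cim z + cim w. Proof. by case: z; case: w. Qed.
Lemma creN z : cre (- z) = - cre z. Proof. by case: z. Qed.
Lemma cimN z : cim (- z) = - cim z. Proof. by case: z. Qed.
Lemma creB z w : cre (z - w) = cre z - cre w. Proof. by case: z; case: w. Qed.
Lemma cimB z w : cim (z - w) = cim z - cim w. Proof. by case: z; case: w. Qed.
Lemma creV z : cre (z^-1) = cre z / (cre z ^+ 2 + cim z ^+ 2). Proof. by case: z. Qed.
Lemma cimV z : cim (z^-1) = - (cim z / (cre z ^+ 2 + cim z ^+ 2)). Proof. by case: z. Qed.
Lemma cmod2 z : cmod z ^+ 2 = cre z ^+ 2 + cim z ^+ 2.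
Proof. by rewrite /cmod sqr_sqrtr // addr_ge0 // sqr_ge0. Qed.
Lemma cmod_ge0 z : 0 <= cmod z. Proof. exact: sqrtr_ge0. Qed.
Lemma cmod_le z r : 0 <= r -> (cmod z <= r) = (cre z ^+ 2 + cim z ^+ 2 <= r ^+ 2).
Proof. by move=> r0; rewrite -cmod2 ler_pXn2r // ?nnegrE ?cmod_ge0. Qed.
Lemma complex_ext z w : cre z = cre w -> cim z = cim w -> z = w.
Proof. by case: z; case: w => ? ? ? ? /= -> ->. Qed.
End C.
Section C2.
Variable R : realType.
Implicit Types z w : R[i].
Lemma Dh_inv z w : 0 < cim z -> 0 < cim w ->
  Dh (- z^-1) (- w^-1) = Dh z w.
Proof.
case: z => a b; case: w => c e /= b0 e0.
rewrite /Dh !cmod2 /=.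
have p0 : a ^+ 2 + b ^+ 2 != 0 by apply/lt0r_neq0; nra.
have q0 : c ^+ 2 + e ^+ 2 != 0 by apply/lt0r_neq0; nra.
rewrite /cim /=.
field; by rewrite (gt_eqF b0) (gt_eqF e0) p0 q0.
Qed.
End C2.
Section Reals.
Variable R : realType.
Implicit Types (x y t A B C K N q : R).

Lemma sqr_le_abs x y : 0 <= y -> x ^+ 2 <= y ^+ 2 -> `|x| <= y.
Proof.
move=> y0 h; rewrite -(ger0_norm y0); rewrite -ler_sqr ?nnegrE //.
by rewrite !real_normK ?num_real.
Qed.

Lemma sqr_le x y : 0 <= y -> x ^+ 2 <= y ^+ 2 -> x <= y.
Proof. by move=> y0 h; apply: le_trans (ler_norm x) (sqr_le_abs y0 h). Qed.

(* pointwise AM-GM / Cauchy-Schwarz step *)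
Lemma pw_bound c1 c2 d1 d2 N Kq cu cw t :
  0 <= N -> N ^+ 2 = c1 ^+ 2 + c2 ^+ 2 -> 0 <= Kq -> 0 <= cu -> 0 <= cw -> 0 < t ->
  d1 ^+ 2 + d2 ^+ 2 <= Kq ^+ 2 * cu * cw ->
  2 * t * (c1 * d1 + c2 * d2) <= N * Kq * (t ^+ 2 * cu + cw).
Proof.
move=> N0 NE K0 cu0 cw0 t0 hd.
apply: sqr_le; first by apply: mulr_ge0; [exact: mulr_ge0|]; nra.
have cs : (c1 * d1 + c2 * d2) ^+ 2 <= N ^+ 2 * (d1 ^+ 2 + d2 ^+ 2).
  rewrite NE -subr_ge0.
  have -> : (c1 ^+ 2 + c2 ^+ 2) * (d1 ^+ 2 + d2 ^+ 2) - (c1 * d1 + c2 * d2) ^+ 2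
    = (c1 * d2 - c2 * d1) ^+ 2 by ring.
  exact: sqr_ge0.
have am : 4 * t ^+ 2 * cu * cw <= (t ^+ 2 * cu + cw) ^+ 2.
  rewrite -subr_ge0.
  have -> : (t ^+ 2 * cu + cw) ^+ 2 - 4 * t ^+ 2 * cu * cw = (t ^+ 2 * cu - cw) ^+ 2 by ring.
  exact: sqr_ge0.
have e1 : (2 * t * (c1 * d1 + c2 * d2)) ^+ 2 = 4 * t ^+ 2 * (c1 * d1 + c2 * d2) ^+ 2 by ring.
have e2 : (N * Kq * (t ^+ 2 * cu + cw)) ^+ 2 = N ^+ 2 * Kq ^+ 2 * (t ^+ 2 * cu + cw) ^+ 2 by ring.
rewrite e1 e2.
have h1 : (c1 * d1 + c2 * d2) ^+ 2 <= N ^+ 2 * (Kq ^+ 2 * cu * cw).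
  apply: le_trans cs _; apply: ler_wpM2l => //; exact: sqr_ge0.
have t2 : 0 <= 4 * t ^+ 2 by nra.
apply: le_trans (ler_wpM2l t2 h1) _.
have -> : 4 * t ^+ 2 * (N ^+ 2 * (Kq ^+ 2 * cu * cw)) = N ^+ 2 * Kq ^+ 2 * (4 * t ^+ 2 * cu * cw) by ring.
apply: ler_wpM2l => //; apply: mulr_ge0; exact: sqr_ge0.
Qed.

Lemma quad_bound N Kq A B : 0 <= N -> 0 <= Kq -> 0 <= A -> 0 <= B ->
  (forall t, 0 < t -> 2 * t * N ^+ 2 <= N * Kq * (t ^+ 2 * A + B)) ->
  N ^+ 2 <= Kq ^+ 2 * A * B.
Proof.
move=> N0 K0 A0 B0 h.
have [->|Np] := eqVneq N 0; first by rewrite expr0n /=; apply: mulr_ge0 => //; apply: mulr_ge0 => //; exact: sqr_ge0.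
have Nq : 0 < N by rewrite lt_def Np.
have h' t : 0 < t -> 2 * t * N <= Kq * (t ^+ 2 * A + B).
  move=> t0; have := h t t0.
  have -> : 2 * t * N ^+ 2 = N * (2 * t * N) by ring.
  by rewrite -[N * Kq * _]mulrA ler_pM2l.
have [KA0|KAp] := eqVneq (Kq * A) 0.
  pose t := (Kq * B + 1) / (2 * N).
  have t0 : 0 < t by rewrite /t divr_gt0 //; nra.
  have := h' t t0.
  have -> : 2 * t * N = Kq * B + 1 by rewrite /t; field; apply/lt0r_neq0.
  have -> : Kq * (t ^+ 2 * A + B) = t ^+ 2 * (Kq * A) + Kq * B by ring.
  rewrite KA0 mulr0 add0r; lra.
have KAq : 0 < Kq * A by rewrite lt_def KAp /=; exact: mulr_ge0.
pose t := N / (Kq * A).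
have t0 : 0 < t by exact: divr_gt0.
have A0' : A != 0 by apply/eqP => ee; move: KAp; rewrite ee mulr0 eqxx.
have K0' : Kq != 0 by apply/eqP => ee; move: KAp; rewrite ee mul0r eqxx.
have h2 := h' t t0.
have e1 : Kq * (t ^+ 2 * A + B) = N ^+ 2 / (Kq * A) + Kq * B.
  by rewrite /t; field; rewrite A0' K0'.
have e2 : 2 * t * N = 2 * (N ^+ 2 / (Kq * A)).
  by rewrite /t; field; rewrite A0' K0'.
rewrite e1 e2 in h2.
have h3 : N ^+ 2 / (Kq * A) <= Kq * B by lra.
have := h3; rewrite ler_pdivrMr // => h4.
have -> : Kq ^+ 2 * A * B = Kq * B * (Kq * A) by ring.
exact: h4.
Qed.


Definition kf (o e : R) : R := if o == 0 then 0 else ((1 + e ^+ 2 / o) ^+ 2)^-1.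

Lemma kf_ge0 o e : 0 <= o -> 0 <= kf o e.
Proof.
move=> o0; rewrite /kf; case: eqP => // /eqP on0.
have op : 0 < o by rewrite lt_def on0.
rewrite invr_ge0; apply: exprn_ge0; have := sqr_ge0 e.
by move=> ?; apply: addr_ge0 => //; apply: divr_ge0 => //; exact: ltW.
Qed.

Lemma kf_lt1 o e : 0 <= o -> 0 < e -> kf o e < 1.
Proof.
move=> o0 e0; rewrite /kf; case: eqP => // /eqP on0.
have op : 0 < o by rewrite lt_def on0.
have h : 0 < e ^+ 2 / o by apply: divr_gt0 => //; exact: exprn_gt0.
rewrite invf_lt1; last by apply: exprn_gt0; lra.
have : 1 < 1 + e ^+ 2 / o by lra.
by move=> h1; rewrite expr2; nra.
Qed.

Lemma kf_bound o e c A B K Y : 0 < e -> e <= c -> 0 <= o -> 0 <= A -> 0 <= B ->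
  e * A <= o -> e * B <= o -> 0 <= K -> Y <= K * A * B ->
  Y / ((c + A) * (c + B)) <= kf o e * K.
Proof.
move=> e0 ec o0 A0 B0 eA eB K0 YK.
have cA : 0 < c + A by lra.
have cB : 0 < c + B by lra.
have den : 0 < (c + A) * (c + B) by exact: mulr_gt0.
rewrite ler_pdivrMr //.
apply: le_trans YK _.
rewrite /kf; case: eqP => [Ho0|/eqP on0].
  have -> : A = 0 by apply/eqP; rewrite eq_le A0 andbT; rewrite Ho0 in eA; nra.
  by rewrite !(mulr0, mul0r).
have op : 0 < o by rewrite lt_def on0.
have -> : ((1 + e ^+ 2 / o) ^+ 2)^-1 = (o / (o + e ^+ 2)) ^+ 2.
  by field; apply/andP; split; apply/lt0r_neq0 => //; nra.
have oe : 0 < o + e ^+ 2 by nra.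
have fA : A <= o / (o + e ^+ 2) * (c + A).
  rewrite mulrC mulrA ler_pdivlMr //; nra.
have fB : B <= o / (o + e ^+ 2) * (c + B).
  rewrite mulrC mulrA ler_pdivlMr //; nra.
have -> : (o / (o + e ^+ 2)) ^+ 2 * K * ((c + A) * (c + B)) =
  K * ((o / (o + e ^+ 2) * (c + A)) * (o / (o + e ^+ 2) * (c + B))) by ring.
rewrite -mulrA; apply: ler_wpM2l => //.
apply: ler_pM => //.
Qed.

Lemma geo_ge0 q n : 0 <= q -> 0 <= q ^+ n. Proof. by move=> q0; exact: exprn_ge0. Qed.

Definition Lseq (r : nat -> R) C q := sup (range (fun n => r n - C * q ^+ n / (1 - q))).

Lemma Lseq_bound (r : nat -> R) C q : 0 <= C -> 0 <= q < 1 ->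
  (forall n, `|r n.+1 - r n| <= C * q ^+ n) ->
  forall n, `|r n - Lseq r C q| <= C * q ^+ n / (1 - q).
Proof.
move=> C0 /andP[q0 q1] hr.
have q1' : 0 < 1 - q by lra.
pose E n := C * q ^+ n / (1 - q).
have Estep n : E n - E n.+1 = C * q ^+ n.
  by rewrite /E exprS; field; apply/lt0r_neq0.
pose w n := r n - E n.
pose v n := r n + E n.
have wi : {homo w : i j / (i <= j)%N >-> i <= j}.
  apply: homo_leq; [exact: lexx | move=> ? ? ?; exact: le_trans|].
  move=> n; rewrite /w; have := hr n; rewrite ler_norml => /andP[h1 h2].
  have := Estep n; lra.
have vd : {homo v : i j / (i <= j)%N >-> j <= i}.
  apply: homo_leq; [exact: lexx | move=> ? ? ? h1 h2; exact: le_trans h2 h1|].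
  move=> n; rewrite /v; have := hr n; rewrite ler_norml => /andP[h1 h2].
  have := Estep n; lra.
have E0 n : 0 <= E n.
  by rewrite /E; apply: divr_ge0; [apply: mulr_ge0 => //; exact: exprn_ge0| exact: ltW].
have wv n m : w n <= v m.
  have h := wi n (maxn n m) (leq_maxl n m).
  have h' := vd m (maxn n m) (leq_maxr n m).
  have : w (maxn n m) <= v (maxn n m) by rewrite /w /v; have := E0 (maxn n m); lra.
  move=> h''; exact: le_trans h (le_trans h'' h').
have ub : has_ubound (range w) by exists (v 0%N) => _ [k _ <-]; exact: wv.
move=> n.
have l1 : w n <= Lseq r C q by rewrite /Lseq; apply: (ub_le_sup ub); exists n.
have l2 : Lseq r C q <= v n.
  rewrite /Lseq.
  by apply: ge_sup; [exists (w 0%N); exists 0%N | move=> _ [k _ <-]; exact: wv].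
rewrite ler_norml; rewrite /w /v /E in l1 l2 *; apply/andP; split; lra.
Qed.

Lemma geo_small q E t : 0 <= q < 1 -> (forall n, t <= E * q ^+ n) -> t <= 0.
Proof.
move=> /andP[q0 q1] h.
have qn : `|q| < 1 by rewrite ger0_norm.
rewrite leNgt; apply/negP => t0.
have /cvgrPdist_lt /(_ t t0) := @cvg_geometric R E q qn.
case=> N _ /(_ N (leqnn N)) /=.
rewrite sub0r normrN => h1.
have := h N; have := ler_norm (E * q ^+ N); rewrite /geometric /=; lra.
Qed.

Lemma geo_cvg (r : nat -> R) L E q : 0 <= q < 1 -> (forall n, `|r n - L| <= E * q ^+ n) ->
  r @ \oo --> L.
Proof.
move=> /andP[q0 q1] h.
have qn : `|q| < 1 by rewrite ger0_norm.
apply/cvgrPdist_lt => eps eps0.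
have /cvgrPdist_lt /(_ eps eps0) := @cvg_geometric R E q qn.
apply: filterS => n /=; rewrite sub0r normrN distrC => h1.
apply: le_lt_trans (h n) _; apply: le_lt_trans (ler_norm _) _.
by rewrite /geometric /= in h1.
Qed.

End Reals.

Section C3.
Variable R : realType.
Implicit Types z w : R[i].
Lemma cre_le z : `|cre z| <= cmod z.
Proof.
apply: sqr_le_abs; first exact: cmod_ge0.
rewrite cmod2; have := sqr_ge0 (cim z); lra.
Qed.
Lemma cim_le z : `|cim z| <= cmod z.
Proof.
apply: sqr_le_abs; first exact: cmod_ge0.
rewrite cmod2; have := sqr_ge0 (cre z); lra.
Qed.
Lemma cmod_le_sum z : cmod z <= `|cre z| + `|cim z|.
Proof.
rewrite cmod_le; last by apply: addr_ge0.
have h1 := sqr_ge0 (cre z); have h2 := normr_ge0 (cre z); have h3 := normr_ge0 (cim z).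
rewrite -(real_normK (num_real (cre z))) -(real_normK (num_real (cim z))).
nra.
Qed.
Lemma cmodD z w : cmod (z + w) <= cmod z + cmod w.
Proof.
rewrite cmod_le; last by apply: addr_ge0; exact: cmod_ge0.
rewrite creD cimD.
have hz := cmod2 z; have hw := cmod2 w.
have z0 := cmod_ge0 z; have w0 := cmod_ge0 w.
have cs : cre z * cre w + cim z * cim w <= cmod z * cmod w.
  apply: sqr_le; first exact: mulr_ge0.
  rewrite exprMn hz hw -subr_ge0.
  have -> : (cre z ^+ 2 + cim z ^+ 2) * (cre w ^+ 2 + cim w ^+ 2) -
    (cre z * cre w + cim z * cim w) ^+ 2 = (cre z * cim w - cim z * cre w) ^+ 2 by ring.
  exact: sqr_ge0.
have -> : (cre z + cre w) ^+ 2 + (cim z + cim w) ^+ 2 =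
  (cre z ^+ 2 + cim z ^+ 2) + (cre w ^+ 2 + cim w ^+ 2) + 2 * (cre z * cre w + cim z * cim w) by ring.
rewrite -hz -hw; nra.
Qed.
Lemma cmod_real (r : R) : cmod (Complex r 0) = `|r|.
Proof.
rewrite /cmod /cre /cim /= expr0n /= addr0 -(real_normK (num_real r)).
by rewrite sqrtr_sqr normr_id.
Qed.
Lemma cmod_scale (c p q : R) : 0 <= c -> cmod (Complex (c * p) (c * q)) = c * cmod (Complex p q).
Proof.
move=> c0; rewrite /cmod /cre /cim /= !exprMn -mulrDr sqrtrM ?sqr_ge0 //.
by rewrite sqrtr_sqr ger0_norm.
Qed.
End C3.
Section R6.
Variable R : realType.
Lemma phi_bounds (p q o e : R) : 0 < e -> 0 <= o -> e <= q ->
  p ^+ 2 + q ^+ 2 <= ((2 + o) / e) ^+ 2 ->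
  e ^+ 3 / (2 + o) ^+ 2 <= q / (p ^+ 2 + q ^+ 2) /\
  (- (p / (p ^+ 2 + q ^+ 2))) ^+ 2 + (q / (p ^+ 2 + q ^+ 2)) ^+ 2 <= (e^-1) ^+ 2.
Proof.
move=> e0 o0 eq hN.
have q0 : 0 < q by lra.
have Ng : e ^+ 2 <= p ^+ 2 + q ^+ 2.
  have : e ^+ 2 <= q ^+ 2 by rewrite ler_pXn2r // ?nnegrE; lra.
  have := sqr_ge0 p; lra.
have Np : 0 < p ^+ 2 + q ^+ 2 by have := exprn_gt0 2 e0; lra.
have o2 : 0 < 2 + o by lra.
split.
  have -> : e ^+ 3 / (2 + o) ^+ 2 = e / ((2 + o) / e) ^+ 2.
    by field; apply/andP; split; apply/lt0r_neq0.
  have M0 : 0 < ((2 + o) / e) ^+ 2 by apply: exprn_gt0; exact: divr_gt0.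
  rewrite ler_pdivrMr // mulrC mulrA ler_pdivlMr //.
  rewrite [_ * q]mulrC; apply: ler_pM => //; [exact: ltW|exact: ltW].
have -> : (- (p / (p ^+ 2 + q ^+ 2))) ^+ 2 + (q / (p ^+ 2 + q ^+ 2)) ^+ 2 = (p ^+ 2 + q ^+ 2)^-1.
  by field; apply/lt0r_neq0.
rewrite exprVn lef_pV2 // ?posrE //; exact: exprn_gt0.
Qed.
End R6.

Section M.
Variables (R : realType) (d : measure_display) (X : measurableType d) (P : probability X R).
Variables (a : X -> R) (s : X -> X -> R) (eta : R).
Variables (Ms Ma : R).
Hypothesis ma : measurable_fun setT a.
Hypothesis aM : forall x, `|a x| <= Ma.
Hypothesis sM : forall x y, s x y <= Ms.
Hypothesis s0 : forall x y, 0 <= s x y.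
Hypothesis ms : measurable_fun setT (fun p : X * X => s p.1 p.2).
Hypothesis eta0 : 0 < eta.
Hypothesis eta1 : eta < 1.
Hypothesis etaa : eta * supnormR a < 1.

Lemma bndP (f : X -> R) B : (forall y, `|f y| <= B) -> [bounded f y | y in setT].
Proof.
move=> fB; exists B; split; first exact: num_real.
move=> M BM y _ /=; exact: le_trans (fB y) (ltW BM).
Qed.

Lemma ms1 x : measurable_fun setT (s x).
Proof. exact: (measurable_fun_pair2 (f := fun p : X * X => s p.1 p.2) x ms). Qed.

Lemma int_s (g : X -> R) B x : measurable_fun setT g -> (forall y, `|g y| <= B) ->
  P.-integrable setT (EFin \o (fun y => s x y * g y)).
Proof.
move=> mg gB; apply: measurable_bounded_integrable => //.
  first [ (apply: (le_lt_trans (probability_le1 P measurableT)); exact: ltry) | (by rewrite -(probability_setT P) ltry) | (by rewrite [X in (X < _)%E]probability_setT ltry) ].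
  exact: mfunM (ms1 x) mg.
apply: (@bndP _ (Ms * B)) => y; rewrite normrM ger0_norm //.
apply: ler_pM => //; exact: le_trans (gB y).
Qed.

Lemma intb (f : X -> R) B : measurable_fun setT f -> (forall y, `|f y| <= B) ->
  P.-integrable setT (EFin \o f).
Proof.
move=> mf fB; apply: measurable_bounded_integrable => //.
  first [ (apply: (le_lt_trans (probability_le1 P measurableT)); exact: ltry) | (by rewrite -(probability_setT P) ltry) | (by rewrite [X in (X < _)%E]probability_setT ltry) ].
exact: bndP fB.
Qed.

Lemma meas_int_nonneg (h : X * X -> R) Bh : measurable_fun setT h -> (forall p, 0 <= h p) ->
  (forall p, h p <= Bh) ->
  measurable_fun setT (fun x => Rintegral P setT (fun y => h (x, y))).
Proof.
move=> mh h0 hB.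
have H := @measurable_fun_fubini_tonelli_F _ _ X X R P (EFin \o h).
apply/measurable_realfun.measurable_EFinP.
apply: (eq_measurable_fun _ _ (H _ _)); last 2 first.
  exact/measurable_realfun.measurable_EFinP.
  by move=> p /=; rewrite lee_fin.
move=> x _ /=; rewrite /Rintegral fineK //.
apply: integrable_fin_num => //.
have := @intb (fun y => h (x, y)) Bh (measurable_fun_pair2 (f := h) x mh).
by apply => y; rewrite ger0_norm.
Qed.

Lemma ge0_bound (g : X -> R) B : (forall y, `|g y| <= B) -> 0 <= B.
Proof. by move=> gB; exact: le_trans (normr_ge0 _) (gB point). Qed.

Lemma meas_int (g : X -> R) B : measurable_fun setT g -> (forall y, `|g y| <= B) ->
  measurable_fun setT (fun x => Rintegral P setT (fun y => s x y * g y)).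
Proof.
move=> mg gB; have B0 := ge0_bound gB.
have gB' y : 0 <= g y + B.
  by have := gB y; rewrite ler_norml => /andP[? ?]; lra.
have E x : Rintegral P setT (fun y => s x y * g y) =
  Rintegral P setT (fun y => s x y * (g y + B)) - B * Rintegral P setT (fun y => s x y).
  rewrite -RintegralZl //; last first.
    apply: (@intb _ Ms); first exact: ms1.
    by move=> y; rewrite ger0_norm.
  rewrite -RintegralB //; first by apply: eq_Rintegral => y _; ring.
  - apply: (@intb _ (Ms * (B + B))).
      exact: mfunM (ms1 x) (mfunD mg (measurable_cst _)).
    move=> y; rewrite normrM ger0_norm // ger0_norm //.
    apply: ler_pM => //.
    by have := gB y; rewrite ler_norml => /andP[? ?]; lra.
  - apply: (@intb _ (B * Ms)).
      exact: mfunM (measurable_cst _) (ms1 x).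
    move=> y; rewrite normrM ger0_norm // ger0_norm //.
    exact: ler_pM.
rewrite (_ : (fun x => _) = (fun x => Rintegral P setT (fun y => s x y * (g y + B)) - B * Rintegral P setT (fun y => s x y))); last first.
  by apply/funext => x; rewrite E.
apply: mfunB.
  apply: (@meas_int_nonneg (fun p => s p.1 p.2 * (g p.2 + B)) (Ms * (B + B))).
    apply: mfunM ms (mfunD (measurableT_comp mg measurable_snd) (measurable_cst _)).
  by move=> p; apply: mulr_ge0.
  move=> p; apply: ler_pM => //.
  by have := gB p.2; rewrite ler_norml => /andP[? ?]; lra.
apply: mfunM (measurable_cst _) _.
apply: (@meas_int_nonneg (fun p => s p.1 p.2) Ms) => //.
Qed.


Definition mb (g : X -> R) := measurable_fun setT g /\ exists B, forall y, `|g y| <= B.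
Local Notation I x g := (Rintegral P setT (fun y => s x y * g y)).

Lemma mb_int x g : mb g -> P.-integrable setT (EFin \o (fun y => s x y * g y)).
Proof. by case=> mg [B gB]; exact: (@int_s g B x mg gB). Qed.

Lemma mb_meas g : mb g -> measurable_fun setT (fun x => I x g).
Proof. by case=> mg [B gB]; exact: (@meas_int g B mg gB). Qed.

Lemma mbD g1 g2 : mb g1 -> mb g2 -> mb (fun y => g1 y + g2 y).
Proof.
move=> [m1 [B1 h1]] [m2 [B2 h2]]; split; first exact: mfunD.
exists (B1 + B2) => y; apply: le_trans (ler_normD _ _) _; exact: lerD.
Qed.

Lemma mbN g : mb g -> mb (fun y => - g y).
Proof.
move=> [m1 [B1 h1]]; split; first exact: mfunN.
by exists B1 => y; rewrite normrN.
Qed.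

Lemma mbB g1 g2 : mb g1 -> mb g2 -> mb (fun y => g1 y - g2 y).
Proof. by move=> h1 h2; apply: mbD h1 (mbN h2). Qed.

Lemma mbZ c g : mb g -> mb (fun y => c * g y).
Proof.
move=> [m1 [B1 h1]]; split; first exact: mfunM (measurable_cst _) m1.
exists (`|c| * B1) => y; rewrite normrM; apply: ler_wpM2l => //.
Qed.

Lemma mb_cst c : mb (fun _ => c).
Proof. by split; [exact: measurable_cst | exists `|c|]. Qed.

Lemma mb_cre (w : X -> R[i]) : BC w -> mb (fun y => cre (w y)).
Proof.
move=> [[m1 m2] [M hM]]; split => //.
by exists M => y; apply: le_trans (cre_le _) (hM y).
Qed.

Lemma mb_cim (w : X -> R[i]) : BC w -> mb (fun y => cim (w y)).
Proof.
move=> [[m1 m2] [M hM]]; split => //.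
by exists M => y; apply: le_trans (cim_le _) (hM y).
Qed.

Lemma I_add x g1 g2 : mb g1 -> mb g2 -> I x (fun y => g1 y + g2 y) = I x g1 + I x g2.
Proof.
move=> h1 h2; rewrite -RintegralD //; [|exact: mb_int|exact: mb_int].
by apply: eq_Rintegral => y _; ring.
Qed.

Lemma I_sub x g1 g2 : mb g1 -> mb g2 -> I x (fun y => g1 y - g2 y) = I x g1 - I x g2.
Proof.
move=> h1 h2; rewrite -RintegralB //; [|exact: mb_int|exact: mb_int].
by apply: eq_Rintegral => y _; ring.
Qed.

Lemma I_scale x c g : mb g -> I x (fun y => c * g y) = c * I x g.
Proof.
move=> h1; rewrite -RintegralZl //; last exact: mb_int.
by apply: eq_Rintegral => y _; ring.
Qed.

Lemma I_le x g1 g2 : mb g1 -> mb g2 -> (forall y, g1 y <= g2 y) -> I x g1 <= I x g2.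
Proof.
move=> h1 h2 h; apply: le_Rintegral => //; [exact: mb_int|exact: mb_int|].
by move=> y _; apply: ler_wpM2l.
Qed.

Lemma I_ge0 x g : (forall y, 0 <= g y) -> 0 <= I x g.
Proof. by move=> h; apply: Rintegral_ge0 => y _; exact: mulr_ge0. Qed.

Lemma fineP1 : fine (P setT) = 1.
Proof.
first [ by rewrite probability_setT | by rewrite (probability_setT P) |
  by have := probability_setT P; move=> /= ->
  | by move: (probability_setT P) => /= E; rewrite [X in fine X]E ].
Qed.

Lemma mb_norm g : mb g -> mb (fun y => `|g y|).
Proof.
move=> [m1 [B h]]; split; first exact: measurableT_comp.
by exists B => y; rewrite normr_id.
Qed.

Lemma I_bound x g B : mb g -> (forall y, `|g y| <= B) -> `|I x g| <= Ms * B.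
Proof.
move=> hg gB.
have h0 := le_normr_Rintegral measurableT (mb_int x hg).
apply: le_trans h0 _.
have -> : Rintegral P setT (fun y => `|s x y * g y|) = I x (fun y => `|g y|).
  by apply: eq_Rintegral => y _; rewrite normrM ger0_norm.
apply: (@le_trans _ _ (Rintegral P setT (fun _ => Ms * B))).
  apply: le_Rintegral => //; [exact: mb_int (mb_norm hg)| |].
    exact: (@intb (fun _ => Ms * B) `|Ms * B| (measurable_cst _) (fun _ => lexx _)).
  move=> y _; apply: ler_pM => //; exact: gB.
by rewrite Rintegral_cst // fineP1 mulr1.
Qed.


Lemma supnorm_le (w : X -> R[i]) M : (forall x, cmod (w x) <= M) -> supnorm w <= M.
Proof.
move=> h; apply: ge_sup; first by exists (cmod (w point)); exists point.
by move=> _ [x _ <-].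
Qed.

Lemma le_supnorm (w : X -> R[i]) x : cbounded w -> cmod (w x) <= supnorm w.
Proof.
case=> M hM; apply: ub_le_sup; last by exists x.
by exists M => _ [y _ <-].
Qed.

Lemma le_supnormR x : `|a x| <= supnormR a.
Proof.
apply: ub_le_sup; last by exists x.
by exists Ma => _ [y _ <-].
Qed.

Lemma cre_Sop w x : cre (Sop P s w x) = I x (fun y => cre (w y)). Proof. by []. Qed.
Lemma cim_Sop w x : cim (Sop P s w x) = I x (fun y => cim (w y)). Proof. by []. Qed.

Lemma BC_le1 (w : X -> R[i]) : BC w -> supnorm w <= 1 -> forall y, cmod (w y) <= 1.
Proof. by move=> [_ hb] h y; apply: le_trans (le_supnorm y hb) h. Qed.

Lemma Sop_bnd w : BC w -> (forall y, cmod (w y) <= 1) -> forall x, cmod (Sop P s w x) <= Ms + Ms.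
Proof.
move=> hw h1 x; apply: le_trans (cmod_le_sum _) _.
rewrite cre_Sop cim_Sop; apply: lerD.
  rewrite -[Ms]mulr1; apply: I_bound; first exact: mb_cre.
  by move=> y; apply: le_trans (cre_le _) (h1 y).
rewrite -[Ms]mulr1; apply: I_bound; first exact: mb_cim.
by move=> y; apply: le_trans (cim_le _) (h1 y).
Qed.

Lemma Oset_ub : has_ubound [set supnorm (Sop P s w) | w in [set w | BC w /\ supnorm w <= 1]].
Proof.
exists (Ms + Ms) => _ [w [Bw nw] <-]; apply: supnorm_le.
by apply: Sop_bnd => //; exact: BC_le1.
Qed.

Lemma opn_bound w : BC w -> (forall y, cmod (w y) <= 1) ->
  forall x, cmod (Sop P s w x) <= opnorm P s.
Proof.
move=> hw h1 x.
have hb : cbounded (Sop P s w) by exists (Ms + Ms); exact: Sop_bnd.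
apply: le_trans (le_supnorm x hb) _.
apply: (ub_le_sup Oset_ub); exists w => //; split => //.
exact: supnorm_le.
Qed.

Lemma cmod0 : cmod (0 : R[i]) = 0.
Proof. by rewrite /cmod /cre /cim /= expr0n /= addr0 sqrtr0. Qed.

Lemma BC0 : BC (fun _ : X => 0 : R[i]).
Proof.
split; first by split; exact: measurable_cst.
by exists 0 => _; rewrite cmod0.
Qed.

Lemma opn_ge0 : 0 <= opnorm P s.
Proof.
apply: le_trans (cmod_ge0 (Sop P s (fun _ => 0) point)) (opn_bound BC0 _ point).
by move=> _; rewrite cmod0.
Qed.

Lemma cmod_scale' (c : R) (z : R[i]) : 0 <= c ->
  cmod (Complex (c * cre z) (c * cim z)) = c * cmod z.
Proof. by case: z => p q c0; exact: cmod_scale. Qed.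

Lemma Sop_eta w : BC w -> (forall y, cmod (w y) <= eta^-1) ->
  forall x, eta * cmod (Sop P s w x) <= opnorm P s.
Proof.
move=> hw h x.
pose w' := fun y => Complex (eta * cre (w y)) (eta * cim (w y)).
have e0 : 0 <= eta by exact: ltW.
have hw' : BC w'.
  split.
    split; rewrite /w' /cre /=.
      exact: mfunM (measurable_cst _) hw.1.1.
    exact: mfunM (measurable_cst _) hw.1.2.
  exists 1 => y; rewrite /w' cmod_scale' //.
  by rewrite -(mulfV (lt0r_neq0 eta0)); apply: ler_wpM2l.
have h1 : forall y, cmod (w' y) <= 1.
  move=> y; rewrite /w' cmod_scale' //.
  by rewrite -(mulfV (lt0r_neq0 eta0)); apply: ler_wpM2l.
have := opn_bound hw' h1 x.
have -> : Sop P s w' x = Complex (eta * cre (Sop P s w x)) (eta * cim (Sop P s w x)).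
  rewrite /Sop /w' /cre /cim /=; congr Complex.
    exact: (I_scale x eta (mb_cre hw)).
  exact: (I_scale x eta (mb_cim hw)).
by rewrite cmod_scale'.
Qed.

Lemma Sop_eta_im w : BC w -> (forall y, cmod (w y) <= eta^-1) ->
  forall x, eta * I x (fun y => cim (w y)) <= opnorm P s.
Proof.
move=> hw h x; apply: le_trans (Sop_eta hw h x).
apply: ler_wpM2l; first exact: ltW.
rewrite -cim_Sop; apply: le_trans (ler_norm _) (cim_le _).
Qed.

Lemma meas_inv (f : X -> R) : measurable_fun setT f -> (forall x, 0 < f x) ->
  measurable_fun setT (fun x => (f x)^-1).
Proof.
move=> mf fp.
have mi : measurable_fun (`]0, +oo[%classic : set R) (@GRing.inv R).
  apply: measurable_realfun.open_continuous_measurable_fun; first exact: interval_open.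
  move=> y; rewrite inE /= in_itv /= andbT => y0.
  by apply: inv_continuous; exact: lt0r_neq0.
apply: (@measurable_comp _ _ _ _ _ _ (`]0, +oo[%classic : set R)) mi mf => //.
by move=> _ [x _ <-]; rewrite /= in_itv /= andbT.
Qed.

Definition Zeta (u : R[i] -> X -> R[i]) z x := z + Complex (a x) 0 + Sop P s (u z) x.

Lemma cre_Zeta u z x : cre (Zeta u z x) = cre z + a x + I x (fun y => cre (u z y)).
Proof. by rewrite /Zeta !creD. Qed.

Lemma cim_Zeta u z x : cim (Zeta u z x) = cim z + I x (fun y => cim (u z y)).
Proof. by rewrite /Zeta !cimD /cim /= addr0. Qed.


Lemma zeta_im u z x : Beta P s eta u -> Heta eta z -> eta <= cim (Zeta u z x).
Proof.
move=> hu hz; have [[_ hpos] _] := hu z hz.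
rewrite cim_Zeta; have [_ [hz2 _]] := hz.
have : 0 <= I x (fun y => cim (u z y)) by apply: I_ge0 => y; exact: ltW.
lra.
Qed.

Lemma zeta_mod u z x : Beta P s eta u -> Heta eta z ->
  cmod (Zeta u z x) <= (2 + opnorm P s) / eta.
Proof.
move=> hu hz; have [[hBC _] [_ hub]] := hu z hz.
have [_ [_ hz3]] := hz.
rewrite ler_pdivlMr // mulrC.
have h1 := cmodD (z + Complex (a x) 0) (Sop P s (u z) x).
have h2 := cmodD z (Complex (a x) 0).
have h3 := Sop_eta hBC hub x.
rewrite cmod_real in h2.
have h4 : eta * `|a x| <= 1.
  apply: le_trans (ler_wpM2l (ltW eta0) (le_supnormR x)) (ltW etaa).
have h5 : eta * cmod z <= 1 by rewrite -(mulfV (lt0r_neq0 eta0)); apply: ler_wpM2l => //; exact: ltW.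
rewrite /Zeta.
have e0 := ltW eta0.
apply: le_trans (ler_wpM2l e0 h1) _.
rewrite mulrDr.
have := ler_wpM2l e0 h2; rewrite mulrDr => h6.
lra.
Qed.

Lemma Phi_re u z x : cre (Phi P a s u z x) =
  - (cre (Zeta u z x) / (cre (Zeta u z x) ^+ 2 + cim (Zeta u z x) ^+ 2)).
Proof. by rewrite /Phi -/(Zeta u z x) creN creV. Qed.

Lemma Phi_im u z x : cim (Phi P a s u z x) =
  cim (Zeta u z x) / (cre (Zeta u z x) ^+ 2 + cim (Zeta u z x) ^+ 2).
Proof. by rewrite /Phi -/(Zeta u z x) cimN cimV opprK. Qed.

Lemma part1 u : Beta P s eta u -> Beta P s eta (Phi P a s u).
Proof.
move=> hu z hz.
have [[hBC hpos] _] := hu z hz.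
have key x : eta ^+ 3 / (2 + opnorm P s) ^+ 2 <= cim (Phi P a s u z x) /\
   cmod (Phi P a s u z x) <= eta^-1.
  have hi := zeta_im x hu hz.
  have hm := zeta_mod x hu hz.
  have hm2 : cre (Zeta u z x) ^+ 2 + cim (Zeta u z x) ^+ 2 <= ((2 + opnorm P s) / eta) ^+ 2.
    rewrite -cmod2; rewrite ler_pXn2r // ?nnegrE; [exact: cmod_ge0|].
    apply: divr_ge0; last exact: ltW.
    by have := opn_ge0; lra.
  have [b1 b2] := phi_bounds eta0 opn_ge0 hi hm2.
  split; first by rewrite Phi_im.
  rewrite cmod_le; last by rewrite invr_ge0; exact: ltW.
  by rewrite Phi_re Phi_im.
have lbp : 0 < eta ^+ 3 / (2 + opnorm P s) ^+ 2.
  apply: divr_gt0; first exact: exprn_gt0.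
  by apply: exprn_gt0; have := opn_ge0; lra.
split; last by split => x; have [] := key x.
split; last by move=> x; have [k1 _] := key x; exact: lt_le_trans lbp k1.
split; last by exists eta^-1 => x; have [_ k2] := key x.
have mre : measurable_fun setT (fun x => cre (Zeta u z x)).
  rewrite (_ : (fun x => _) = (fun x => cre z + a x + I x (fun y => cre (u z y)))); last first.
    by apply/funext => x; rewrite cre_Zeta.
  apply: mfunD; first exact: mfunD (measurable_cst _) ma.
  exact: mb_meas (mb_cre hBC).
have mim : measurable_fun setT (fun x => cim (Zeta u z x)).
  rewrite (_ : (fun x => _) = (fun x => cim z + I x (fun y => cim (u z y)))); last first.
    by apply/funext => x; rewrite cim_Zeta.
  apply: mfunD; first exact: measurable_cst.
  exact: mb_meas (mb_cim hBC).
have Npos x : 0 < cre (Zeta u z x) ^+ 2 + cim (Zeta u z x) ^+ 2.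
  have := zeta_im x hu hz; have := sqr_ge0 (cre (Zeta u z x)).
  move=> h1 h2; have h3 : 0 < cim (Zeta u z x) := lt_le_trans eta0 h2.
  have := exprn_gt0 2 h3; move=> h4; exact: ltr_wpDl h1 h4.
have mN : measurable_fun setT (fun x => cre (Zeta u z x) ^+ 2 + cim (Zeta u z x) ^+ 2).
  by apply: mfunD; exact: measurable_realfun.measurable_funX.
have mI := meas_inv mN Npos.
split.
  rewrite (_ : (fun x => _) = (fun x => - (cre (Zeta u z x) * (cre (Zeta u z x) ^+ 2 + cim (Zeta u z x) ^+ 2)^-1))); last first.
    by apply/funext => x; rewrite Phi_re.
  by apply: mfunN; exact: mfunM mre mI.
rewrite (_ : (fun x => _) = (fun x => cim (Zeta u z x) * (cre (Zeta u z x) ^+ 2 + cim (Zeta u z x) ^+ 2)^-1)); last first.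
  by apply/funext => x; rewrite Phi_im.
exact: mfunM mim mI.
Qed.

Local Notation lbv := (eta ^+ 3 / (2 + opnorm P s) ^+ 2).

Lemma lbv_gt0 : 0 < lbv.
Proof.
apply: divr_gt0; first exact: exprn_gt0.
by apply: exprn_gt0; have := opn_ge0; lra.
Qed.

Lemma Heta0 : Heta eta (Complex 0 eta).
Proof.
rewrite /Heta /cim /=; split => //; split => //.
rewrite cmod_le; last by rewrite invr_ge0; exact: ltW.
rewrite /cre /cim /= expr0n /= add0r exprVn.
have e2 : eta ^+ 2 <= 1 by apply: exprn_ile1; exact: ltW.
have e3 : 1 <= (eta ^+ 2)^-1 by rewrite invf_ge1 // exprn_gt0.
exact: le_trans e2 e3.
Qed.

Lemma cmodN (z : R[i]) : cmod (- z) = cmod z.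
Proof. by rewrite /cmod creN cimN !sqrrN. Qed.

Lemma Dh_ge0 (p q : R[i]) : 0 < cim p -> 0 < cim q -> 0 <= Dh p q.
Proof.
move=> hp hq; rewrite /Dh; apply: divr_ge0; first exact: sqr_ge0.
exact: ltW (mulr_gt0 hp hq).
Qed.

Lemma frac_le (n A b dd : R) : 0 <= n -> n <= A -> 0 < b -> b <= dd -> n / dd <= A / b.
Proof.
move=> n0 nA b0 bd.
have dd0 : 0 < dd by exact: lt_le_trans b0 bd.
apply: ler_pM => //; first by rewrite invr_ge0; exact: ltW.
by rewrite lef_pV2 // ?posrE.
Qed.

Lemma Dh_bound u w z x : Beta P s eta u -> Beta P s eta w -> Heta eta z ->
  Dh (u z x) (w z x) <= (2 / eta) ^+ 2 / (lbv ^+ 2).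
Proof.
move=> hu hw hz.
have [[_ pu] [lu mu]] := hu z hz.
have [[_ pw] [lw mw]] := hw z hz.
rewrite /Dh; apply: frac_le.
- exact: sqr_ge0.
- have hc : cmod (u z x - w z x) <= 2 / eta.
    apply: le_trans (cmodD _ _) _; rewrite cmodN.
    have -> : 2 / eta = eta^-1 + eta^-1 by field; apply/lt0r_neq0.
    exact: lerD.
  by rewrite expr2 [X in _ <= X]expr2; apply: ler_pM => //; exact: cmod_ge0.
- exact: exprn_gt0 lbv_gt0.
- rewrite expr2; apply: ler_pM => //; exact: ltW lbv_gt0.
Qed.

Definition Dset (u w : R[i] -> X -> R[i]) :=
  [set r | exists z x, Heta eta z /\ r = Dh (u z x) (w z x)].

Lemma Dset_ub u w : Beta P s eta u -> Beta P s eta w -> has_ubound (Dset u w).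
Proof.
move=> hu hw; exists ((2 / eta) ^+ 2 / (lbv ^+ 2)) => _ [z [x [hz ->]]].
exact: Dh_bound.
Qed.

Lemma Dset_ne (u w : R[i] -> X -> R[i]) : Dset u w !=set0.
Proof. by exists (Dh (u (Complex 0 eta) point) (w (Complex 0 eta) point)); exists (Complex 0 eta), point; split => //; exact: Heta0. Qed.

Lemma Dh_le_supD u w z x : Beta P s eta u -> Beta P s eta w -> Heta eta z ->
  Dh (u z x) (w z x) <= supD eta u w.
Proof.
move=> hu hw hz; apply: (ub_le_sup (Dset_ub hu hw)).
by exists z, x.
Qed.

Lemma supD_le (u w : R[i] -> X -> R[i]) K : (forall z x, Heta eta z -> Dh (u z x) (w z x) <= K) ->
  supD eta u w <= K.
Proof.
move=> h; apply: ge_sup; first exact: Dset_ne.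
by move=> _ [z [x [hz ->]]]; exact: h.
Qed.

Lemma supD_ge0 u w : Beta P s eta u -> Beta P s eta w -> 0 <= supD eta u w.
Proof.
move=> hu hw; have hz := Heta0.
apply: le_trans (Dh_le_supD point hu hw hz).
have [[_ pu] _] := hu _ hz; have [[_ pw] _] := hw _ hz.
exact: Dh_ge0.
Qed.

Lemma Dh_num (p q : R[i]) K : 0 < cim p -> 0 < cim q -> Dh p q <= K ->
  (cre p - cre q) ^+ 2 + (cim p - cim q) ^+ 2 <= K * cim p * cim q.
Proof.
move=> hp hq; rewrite /Dh cmod2 creB cimB ler_pdivrMr; last exact: mulr_gt0.
by rewrite mulrA.
Qed.

Lemma part2 u w : Beta P s eta u -> Beta P s eta w ->
  supD eta (Phi P a s u) (Phi P a s w) <= kfactor P s eta * supD eta u w.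
Proof.
move=> hu hw; apply: supD_le => z x hz.
have K0 : 0 <= supD eta u w := supD_ge0 hu hw.
set K := supD eta u w in K0 *.
have [[hBu pu] [lu mu]] := hu z hz.
have [[hBw pw] [lw mw]] := hw z hz.
have md1 : mb (fun y => cre (u z y) - cre (w z y)) := mbB (mb_cre hBu) (mb_cre hBw).
have md2 : mb (fun y => cim (u z y) - cim (w z y)) := mbB (mb_cim hBu) (mb_cim hBw).
pose c1 := I x (fun y => cre (u z y) - cre (w z y)).
pose c2 := I x (fun y => cim (u z y) - cim (w z y)).
pose A := I x (fun y => cim (u z y)).
pose B := I x (fun y => cim (w z y)).
have A0 : 0 <= A := I_ge0 x (fun y => ltW (pu y)).
have B0 : 0 <= B := I_ge0 x (fun y => ltW (pw y)).
have eA : eta * A <= opnorm P s := Sop_eta_im hBu mu x.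
have eB : eta * B <= opnorm P s := Sop_eta_im hBw mw x.
pose Kq := Num.sqrt K.
have Kq0 : 0 <= Kq := sqrtr_ge0 K.
have KqE : Kq ^+ 2 = K := sqr_sqrtr K0.
pose N := Num.sqrt (c1 ^+ 2 + c2 ^+ 2).
have N0 : 0 <= N := sqrtr_ge0 _.
have NE : N ^+ 2 = c1 ^+ 2 + c2 ^+ 2 := sqr_sqrtr (addr_ge0 (sqr_ge0 _) (sqr_ge0 _)).
have pt y : (cre (u z y) - cre (w z y)) ^+ 2 + (cim (u z y) - cim (w z y)) ^+ 2 <=
    Kq ^+ 2 * cim (u z y) * cim (w z y).
  rewrite KqE; apply: Dh_num => //; exact: Dh_le_supD.
have main : c1 ^+ 2 + c2 ^+ 2 <= K * A * B.
  rewrite -NE -KqE; apply: quad_bound => // t t0.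
  have mS : mb (fun y => c1 * (cre (u z y) - cre (w z y)) + c2 * (cim (u z y) - cim (w z y))).
    by apply: mbD; exact: mbZ.
  have mT : mb (fun y => t ^+ 2 * cim (u z y) + cim (w z y)).
    by apply: mbD; [apply: mbZ; exact: mb_cim | exact: mb_cim].
  have h1 : I x (fun y => 2 * t * (c1 * (cre (u z y) - cre (w z y)) + c2 * (cim (u z y) - cim (w z y))))
      <= I x (fun y => N * Kq * (t ^+ 2 * cim (u z y) + cim (w z y))).
    apply: I_le; [exact: mbZ | exact: mbZ |].
    move=> y; exact: (pw_bound N0 NE Kq0 (ltW (pu y)) (ltW (pw y)) t0 (pt y)).
  have e1 : I x (fun y => 2 * t * (c1 * (cre (u z y) - cre (w z y)) + c2 * (cim (u z y) - cim (w z y))))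
      = 2 * t * N ^+ 2.
    transitivity (2 * t * I x (fun y => c1 * (cre (u z y) - cre (w z y)) + c2 * (cim (u z y) - cim (w z y)))).
      exact: (I_scale x (2 * t) mS).
    congr (_ * _); rewrite NE !expr2.
    transitivity (I x (fun y => c1 * (cre (u z y) - cre (w z y))) + I x (fun y => c2 * (cim (u z y) - cim (w z y)))).
      exact: (I_add x (mbZ c1 md1) (mbZ c2 md2)).
    congr (_ + _); [exact: (I_scale x c1 md1) | exact: (I_scale x c2 md2)].
  have e2 : I x (fun y => N * Kq * (t ^+ 2 * cim (u z y) + cim (w z y))) = N * Kq * (t ^+ 2 * A + B).
    transitivity (N * Kq * I x (fun y => t ^+ 2 * cim (u z y) + cim (w z y))).
      exact: (I_scale x (N * Kq) mT).
    congr (_ * _).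
    transitivity (I x (fun y => t ^+ 2 * cim (u z y)) + I x (fun y => cim (w z y))).
      exact: (I_add x (mbZ _ (mb_cim hBu)) (mb_cim hBw)).
    congr (_ + _); exact: (I_scale x _ (mb_cim hBu)).
  by rewrite -e1 -e2.
have pZu : 0 < cim (Zeta u z x) := lt_le_trans eta0 (zeta_im x hu hz).
have pZw : 0 < cim (Zeta w z x) := lt_le_trans eta0 (zeta_im x hw hz).
have eq1 : Dh (Phi P a s u z x) (Phi P a s w z x) = Dh (Zeta u z x) (Zeta w z x).
  by rewrite /Phi -/(Zeta u z x) -/(Zeta w z x); apply: Dh_inv.
have hc1 : c1 = I x (fun y => cre (u z y)) - I x (fun y => cre (w z y)) :=
  I_sub x (mb_cre hBu) (mb_cre hBw).
have hc2 : c2 = A - B := I_sub x (mb_cim hBu) (mb_cim hBw).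
rewrite eq1 /Dh cmod2 creB cimB !cre_Zeta !cim_Zeta.
have -> : cre z + a x + I x (fun y => cre (u z y)) - (cre z + a x + I x (fun y => cre (w z y))) = c1.
  by rewrite hc1; ring.
have -> : cim z + I x (fun y => cim (u z y)) - (cim z + I x (fun y => cim (w z y))) = c2.
  by rewrite hc2 /A /B; ring.
change ((c1 ^+ 2 + c2 ^+ 2) / ((cim z + A) * (cim z + B)) <= kf (opnorm P s) eta * K).
have [_ [hz2 _]] := hz.
exact: kf_bound eta0 hz2 opn_ge0 A0 B0 eA eB K0 main.
Qed.

Lemma supD_eqfix (u w u' w' : R[i] -> X -> R[i]) :
  (forall z, Heta eta z -> u' z = u z) -> (forall z, Heta eta z -> w' z = w z) ->
  supD eta u' w' = supD eta u w.
Proof.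
move=> hu hw; rewrite /supD; congr sup; apply/seteqP; split => _ [z [x [hz ->]]];
  exists z, x; split => //; by rewrite ?hu ?hw.
Qed.

Lemma kf_props : 0 <= kfactor P s eta /\ kfactor P s eta < 1.
Proof. by split; [exact: (kf_ge0 eta opn_ge0) | exact: (kf_lt1 opn_ge0 eta0)]. Qed.

Lemma part4 u w : Beta P s eta u -> Beta P s eta w ->
  (forall z, Heta eta z -> Phi P a s u z = u z) ->
  (forall z, Heta eta z -> Phi P a s w z = w z) ->
  forall z, Heta eta z -> u z = w z.
Proof.
move=> hu hw fu fw z hz.
have h := part2 hu hw; rewrite (supD_eqfix fu fw) in h.
have K0 := supD_ge0 hu hw.
have [k0 k1] := kf_props.
have K00 : supD eta u w <= 0 by nra.
apply/funext => x.
have [[_ pu] _] := hu z hz; have [[_ pw] _] := hw z hz.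
have hD := le_trans (Dh_le_supD x hu hw hz) K00.
have := Dh_num (pu x) (pw x) hD; rewrite !mul0r => h2.
have e1 : (cre (u z x) - cre (w z x)) ^+ 2 = 0.
  by apply/eqP; rewrite eq_le sqr_ge0 andbT; have := sqr_ge0 (cim (u z x) - cim (w z x)); lra.
have e2 : (cim (u z x) - cim (w z x)) ^+ 2 = 0.
  by apply/eqP; rewrite eq_le sqr_ge0 andbT; have := sqr_ge0 (cre (u z x) - cre (w z x)); lra.
apply: complex_ext; apply/eqP; rewrite -subr_eq0; apply/eqP; apply/eqP; rewrite -(sqrf_eq0); apply/eqP.
  exact: e1.
exact: e2.
Qed.

Lemma cim_le_inv (p : R[i]) : cmod p <= eta^-1 -> cim p <= eta^-1.
Proof. by move=> h; apply: le_trans (ler_norm _) (le_trans (cim_le p) h). Qed.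

Lemma close_of_Dh (p q : R[i]) K : 0 < cim p -> 0 < cim q ->
  cmod p <= eta^-1 -> cmod q <= eta^-1 -> 0 <= K -> Dh p q <= K ->
  (cre p - cre q) ^+ 2 <= K / eta ^+ 2 /\ (cim p - cim q) ^+ 2 <= K / eta ^+ 2.
Proof.
move=> pp pq mp mq K0 hD.
have h := Dh_num pp pq hD.
have hb : K * cim p * cim q <= K / eta ^+ 2.
  rewrite -mulrA; apply: ler_wpM2l => //.
  rewrite -exprVn expr2; apply: ler_pM; [exact: ltW pp|exact: ltW pq|exact: cim_le_inv|exact: cim_le_inv].
have := sqr_ge0 (cre p - cre q); have := sqr_ge0 (cim p - cim q).
split; lra.
Qed.

Lemma Dh_of_close (p q : R[i]) T : lbv <= cim p -> lbv <= cim q ->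
  `|cre p - cre q| <= T -> `|cim p - cim q| <= T -> Dh p q <= 2 * T ^+ 2 / lbv ^+ 2.
Proof.
move=> lp lq h1 h2.
have T0 : 0 <= T := le_trans (normr_ge0 _) h1.
rewrite /Dh cmod2 creB cimB; apply: frac_le.
- by apply: addr_ge0; exact: sqr_ge0.
- have s1 : (cre p - cre q) ^+ 2 <= T ^+ 2.
    by rewrite -real_normK ?num_real // expr2 [X in _ <= X]expr2; apply: ler_pM.
  have s2 : (cim p - cim q) ^+ 2 <= T ^+ 2.
    by rewrite -real_normK ?num_real // expr2 [X in _ <= X]expr2; apply: ler_pM.
  lra.
- exact: exprn_gt0 lbv_gt0.
- rewrite expr2; apply: ler_pM => //; exact: ltW lbv_gt0.
Qed.

Definition u0 : R[i] -> X -> R[i] := fun _ _ => Complex 0 1.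

Lemma Beta_u0 : Beta P s eta u0.
Proof.
move=> z hz.
have c1 : cmod (Complex 0 1 : R[i]) = 1 by rewrite /cmod /cre /cim /= expr0n expr1n add0r sqrtr1.
split; first split.
- split; first by split; exact: measurable_cst.
  by exists 1 => y; rewrite /u0 c1.
- by move=> y; rewrite /u0 /cim /=.
split => x; rewrite /u0.
  rewrite /cim /= ler_pdivrMr; last by apply: exprn_gt0; have := opn_ge0; lra.
  rewrite mul1r; apply: (@le_trans _ _ 1).
    by apply: exprn_ile1; exact: ltW.
  rewrite expr2; have := opn_ge0; nra.
rewrite /cmod /cre /cim /= expr0n expr1n add0r sqrtr1 invf_ge1 //; exact: ltW.
Qed.

Definition U n := iter n (Phi P a s) u0.

Lemma Beta_U n : Beta P s eta (U n).
Proof. by elim: n => [|n IH]; [exact: Beta_u0 | exact: part1]. Qed.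

Local Notation k := (kfactor P s eta).
Definition qq := Num.sqrt k.

Lemma q_props : 0 <= qq < 1 /\ qq ^+ 2 = k.
Proof.
have [k0 k1] := kf_props.
have qE : qq ^+ 2 = k := sqr_sqrtr k0.
have q0 : 0 <= qq := sqrtr_ge0 _.
split => //; apply/andP; split => //.
rewrite -qE in k1; nra.
Qed.

Definition Kn n := supD eta (U n.+1) (U n).

Lemma Kn_geo n : Kn n <= k ^+ n * Kn 0.
Proof.
elim: n => [|n IH]; first by rewrite expr0 mul1r.
have h := part2 (Beta_U n.+1) (Beta_U n).
have [k0 _] := kf_props.
rewrite /Kn; apply: le_trans h _.
rewrite exprS -mulrA; apply: ler_wpM2l => //.
Qed.

Definition CC := Num.sqrt (Kn 0) / eta.

Lemma CC_ge0 : 0 <= CC.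
Proof. by apply: divr_ge0; [exact: sqrtr_ge0 | exact: ltW]. Qed.

Lemma step_bound n z x : Heta eta z ->
  `|cre (U n.+1 z x) - cre (U n z x)| <= CC * qq ^+ n /\
  `|cim (U n.+1 z x) - cim (U n z x)| <= CC * qq ^+ n.
Proof.
move=> hz.
have hu := Beta_U n.+1; have hw := Beta_U n.
have [[_ pu] [_ mu]] := hu z hz; have [[_ pw] [_ mw]] := hw z hz.
have K0 : 0 <= Kn n := supD_ge0 hu hw.
have [h1 h2] := close_of_Dh (pu x) (pw x) (mu x) (mw x) K0 (Dh_le_supD x hu hw hz).
have [/andP[q0 _] qE] := q_props.
have K00 : 0 <= Kn 0 := supD_ge0 (Beta_U 1) (Beta_U 0).
have E : (CC * qq ^+ n) ^+ 2 = k ^+ n * Kn 0 / eta ^+ 2.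
  rewrite exprMn /CC expr_div_n sqr_sqrtr // exprAC qE.
  by rewrite mulrC mulrA.
have hK : Kn n / eta ^+ 2 <= (CC * qq ^+ n) ^+ 2.
  rewrite E; apply: ler_wpM2r; last exact: Kn_geo.
  by rewrite invr_ge0; exact: exprn_ge0 (ltW eta0).
have P0 : 0 <= CC * qq ^+ n by apply: mulr_ge0; [exact: CC_ge0 | exact: exprn_ge0].
split; apply: sqr_le_abs => //; exact: le_trans hK.
Qed.

Definition CC' := CC / (1 - qq).

Definition Ul : R[i] -> X -> R[i] := fun z x =>
  Complex (Lseq (fun n => cre (U n z x)) CC qq) (Lseq (fun n => cim (U n z x)) CC qq).

Lemma Ul_close n z x : Heta eta z ->
  `|cre (U n z x) - cre (Ul z x)| <= CC' * qq ^+ n /\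
  `|cim (U n z x) - cim (Ul z x)| <= CC' * qq ^+ n.
Proof.
move=> hz; have [qp _] := q_props.
have E : CC * qq ^+ n / (1 - qq) = CC' * qq ^+ n by rewrite /CC' mulrAC.
split; rewrite -E.
  exact: (Lseq_bound CC_ge0 qp (fun m => (step_bound m x hz).1) n).
exact: (Lseq_bound CC_ge0 qp (fun m => (step_bound m x hz).2) n).
Qed.

Lemma CC'_ge0 : 0 <= CC'.
Proof.
have [/andP[_ q1] _] := q_props.
by apply: divr_ge0; [exact: CC_ge0 | lra].
Qed.

Lemma Ul_mod z x : Heta eta z -> cmod (Ul z x) <= eta^-1.
Proof.
move=> hz; have [qp _] := q_props.
rewrite -subr_le0; apply: (@geo_small R qq (CC' + CC')) => // n.
have [c1 c2] := Ul_close n x hz.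
have [_ [_ m]] := Beta_U n hz.
have h := cmodD (U n z x) (Ul z x - U n z x).
rewrite addrC subrK in h.
have h2 := cmod_le_sum (Ul z x - U n z x).
rewrite creB cimB (distrC (cre (Ul z x))) (distrC (cim (Ul z x))) in h2.
have := m x; rewrite mulrDl; lra.
Qed.

Lemma Beta_Ul : Beta P s eta Ul.
Proof.
move=> z hz.
have [qp _] := q_props.
have lbx x : lbv <= cim (Ul z x).
  rewrite -subr_le0; apply: (@geo_small R qq CC') => // n.
  have [_ h2] := Ul_close n x hz; have [_ [l _]] := Beta_U n hz; have := l x.
  move: h2; rewrite ler_norml => /andP[? ?]; lra.
split; last by split => //; move=> x; exact: Ul_mod.
split; last by move=> x; exact: lt_le_trans lbv_gt0 (lbx x).
split; last by exists eta^-1 => x; exact: Ul_mod.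
split.
  apply: (measurable_realfun.measurable_fun_cvg (h := fun m x => cre (U m z x))).
    by move=> m; have [[[[]]]] := Beta_U m hz.
  by move=> x _; exact: (geo_cvg qp (fun n => (Ul_close n x hz).1)).
apply: (measurable_realfun.measurable_fun_cvg (h := fun m x => cim (U m z x))).
  by move=> m; have [[[[]]]] := Beta_U m hz.
by move=> x _; exact: (geo_cvg qp (fun n => (Ul_close n x hz).2)).
Qed.

Lemma Ul_fix z : Heta eta z -> Phi P a s Ul z = Ul z.
Proof.
move=> hz; apply/funext => x.
have hB := Beta_Ul; have hP := part1 hB.
have [qp _] := q_props.
have [/andP[q0 q1] _] := q_props.
have [k0 k1] := kf_props.
have lb0 := lbv_gt0.
have en : eta != 0 := lt0r_neq0 eta0.
have on2 : 2 + opnorm P s != 0 by apply: lt0r_neq0; have := opn_ge0; lra.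
pose E := 2 * CC' / (lbv * eta) + CC'.
have key n : `|cre (Phi P a s Ul z x) - cre (Ul z x)| <= E * qq ^+ n /\
             `|cim (Phi P a s Ul z x) - cim (Ul z x)| <= E * qq ^+ n.
  pose T := CC' * qq ^+ n.
  have T0 : 0 <= T by apply: mulr_ge0; [exact: CC'_ge0 | exact: exprn_ge0].
  have hD1 : supD eta Ul (U n) <= 2 * T ^+ 2 / lbv ^+ 2.
    apply: supD_le => z' x' hz'.
    have [_ [lU _]] := Beta_U n hz'.
    have [_ [lL _]] := hB z' hz'.
    have [c1 c2] := Ul_close n x' hz'.
    by apply: Dh_of_close => //; rewrite distrC.
  have hD2 : supD eta (Phi P a s Ul) (U n.+1) <= supD eta Ul (U n).
    apply: le_trans (part2 hB (Beta_U n)) _.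
    apply: ler_piMl; [exact: supD_ge0 hB (Beta_U n) | exact: ltW].
  have hD3 := Dh_le_supD x hP (Beta_U n.+1) hz.
  have hD := le_trans hD3 (le_trans hD2 hD1).
  have [[_ pP] [_ mP]] := hP z hz.
  have [[_ pU] [_ mU]] := Beta_U n.+1 hz.
  have D0 : 0 <= 2 * T ^+ 2 / lbv ^+ 2.
    by apply: divr_ge0; [apply: mulr_ge0 => //; exact: sqr_ge0 | exact: ltW (exprn_gt0 2 lb0)].
  have [s1 s2] := close_of_Dh (pP x) (pU x) (mP x) (mU x) D0 hD.
  have ET : (2 * T / (lbv * eta)) ^+ 2 = 2 * (2 * T ^+ 2 / lbv ^+ 2 / eta ^+ 2).
    by field; rewrite en on2.
  have X0 : 0 <= 2 * T ^+ 2 / lbv ^+ 2 / eta ^+ 2.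
    by apply: divr_ge0 => //; exact: exprn_ge0 (ltW eta0).
  have F0 : 0 <= 2 * T / (lbv * eta).
    by apply: divr_ge0; [nra | apply: ltW; exact: mulr_gt0].
  have a1 : `|cre (Phi P a s Ul z x) - cre (U n.+1 z x)| <= 2 * T / (lbv * eta).
    apply: sqr_le_abs => //; rewrite ET; lra.
  have a2 : `|cim (Phi P a s Ul z x) - cim (U n.+1 z x)| <= 2 * T / (lbv * eta).
    apply: sqr_le_abs => //; rewrite ET; lra.
  have [b1 b2] := Ul_close n.+1 x hz.
  have qn : CC' * qq ^+ n.+1 <= T.
    rewrite /T exprS mulrCA; apply: ler_piMl; [exact: T0 | exact: ltW].
  have EE : E * qq ^+ n = 2 * T / (lbv * eta) + T by rewrite /E /T; field; rewrite en on2.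
  rewrite EE.
  have t1 (p1 p2 p3 : R) : `|p1 - p3| <= `|p1 - p2| + `|p2 - p3|.
    by have := ler_normD (p1 - p2) (p2 - p3); rewrite addrA subrK.
  split.
    apply: le_trans (t1 _ (cre (U n.+1 z x)) _) _; apply: lerD => //; exact: le_trans b1 qn.
  apply: le_trans (t1 _ (cim (U n.+1 z x)) _) _; apply: lerD => //; exact: le_trans b2 qn.
apply: complex_ext; apply/eqP; rewrite -subr_eq0 -normr_le0.
  by apply: (@geo_small R qq E) => // n; exact: (key n).1.
by apply: (@geo_small R qq E) => // n; exact: (key n).2.
Qed.

Lemma all_parts :
  (forall u, Beta P s eta u -> Beta P s eta (Phi P a s u)) /\
  (forall u w, Beta P s eta u -> Beta P s eta w ->
     supD eta (Phi P a s u) (Phi P a s w) <= kfactor P s eta * supD eta u w) /\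
  (exists u, Beta P s eta u /\ forall z, Heta eta z -> Phi P a s u z = u z) /\
  (forall u w, Beta P s eta u -> Beta P s eta w ->
     (forall z, Heta eta z -> Phi P a s u z = u z) ->
     (forall z, Heta eta z -> Phi P a s w z = w z) ->
     forall z, Heta eta z -> u z = w z).
Proof.
split; first exact: part1.
split; first exact: part2.
split; first by exists Ul; split; [exact: Beta_Ul | exact: Ul_fix].
exact: part4.
Qed.

End M.

Theorem mainTheorem12 (R : realType) (d : measure_display) (X : measurableType d)
  (P : probability X R) (a : X -> R) (s : X -> X -> R) (eta : R) :
  measurable_fun setT a ->
  (exists M : R, forall x, `|a x| <= M) ->
  measurable_fun setT (fun p : X * X => s p.1 p.2) ->
  (exists M : R, forall x y, s x y <= M) ->
  (forall x y, 0 <= s x y) ->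
  (forall x y, s x y = s y x) ->
  0 < eta -> eta < 1 -> eta * supnormR a < 1 ->
  (forall u, Beta P s eta u -> Beta P s eta (Phi P a s u)) /\
  (forall u w, Beta P s eta u -> Beta P s eta w ->
     supD eta (Phi P a s u) (Phi P a s w) <= kfactor P s eta * supD eta u w) /\
  (exists u, Beta P s eta u /\ forall z, Heta eta z -> Phi P a s u z = u z) /\
  (forall u w, Beta P s eta u -> Beta P s eta w ->
     (forall z, Heta eta z -> Phi P a s u z = u z) ->
     (forall z, Heta eta z -> Phi P a s w z = w z) ->
     forall z, Heta eta z -> u z = w z).
Proof.
move=> ma [Ma aM] ms [Ms sM] s0 _ eta0 eta1 etaa.
exact: (all_parts P ma aM sM s0 ms eta0 eta1 etaa).
Qed.
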